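(* Let $(t_k)_{k\in\mathbb{N}}$ be a strictly increasing sequence with $t_1=\pi/4$ and $t_k\to\pi/2$. In $\mathbb{R}^3$ let $C_1=\mathrm{co}\{(-2,2,1),(-2,2,-1)\}$, $C_2=\mathrm{co}\{(2,2,1),(2,2,-1)\}$ and $C_3=\overline{\mathrm{co}}\{(\cos t_k,\sin t_k,(-1)^k): k\in\mathbb{N}\}$, and let $C_1'=\{(-2,2)\}$, $C_2'=\{(2,2)\}$, $C_3'=\overline{\mathrm{co}}\{(\cos t_k,\sin t_k):k\in\mathbb{N}\}\subseteq\mathbb{R}^2$ be their projections onto the $xy$-plane. Then for each $\varepsilon\in(0,1)$ there exists a unique $\varepsilon$-cycle $(u_1,u_2,u_3)$ for $C_1,C_2,C_3$, and there exists a unique $\varepsilon$-cycle $(u_1',u_2',u_3')$ for $C_1',C_2',C_3'$.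
   Context: For a nonempty closed convex set $C$ in a Euclidean space, $\Pi_C(u)$ denotes the Euclidean projection of $u$ onto $C$. For three nonempty closed convex sets $D_1,D_2,D_3$ and $\varepsilon\in(0,1]$, an $\varepsilon$-cycle is a triple $(u_1,u_2,u_3)$ with $u_1=u_3+\varepsilon(\Pi_{D_1}(u_3)-u_3)$, $u_2=u_1+\varepsilon(\Pi_{D_2}(u_1)-u_1)$, $u_3=u_2+\varepsilon(\Pi_{D_3}(u_2)-u_2)$. $\mathrm{co}$ denotes convex hull and $\overline{\mathrm{co}}$ closed convex hull. *)

(* Defs.v *)
From HB Require Import structures.
From mathcomp Require Import all_boot all_order all_algebra.
From mathcomp Require Import all_classical all_reals all_analysis.
Set Implicit Arguments. Unset Strict Implicit. Unset Printing Implicit Defensive.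
Import Order.TTheory GRing.Theory Num.Theory.
Import numFieldNormedType.Exports.
Local Open Scope classical_set_scope.
Local Open Scope ring_scope.

Section Defs.
Variable R : realType.

Definition enorm n (v : 'rV[R]_n) : R := Num.sqrt (\sum_(i < n) v ord0 i ^+ 2).

Definition conv_hull n (A : set 'rV[R]_n) : set 'rV[R]_n :=
  [set x | exists (m : nat) (w : 'I_m -> R) (a : 'I_m -> 'rV[R]_n),
     (forall i, 0 <= w i) /\ \sum_(i < m) w i = 1 /\ (forall i, A (a i)) /\
     x = \sum_(i < m) w i *: a i].

(* closed convex hull: closure of the convex hull (the topology on 'rV_n is the
   product topology, i.e. the Euclidean one) *)
Definition cl_conv_hull n (A : set 'rV[R]_n) : set 'rV[R]_n :=
  closure (conv_hull A).

Definition is_proj n (C : set 'rV[R]_n) (u p : 'rV[R]_n) : Prop :=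
  C p /\ forall q, C q -> enorm (u - p) <= enorm (u - q).

Definition eps_cycle n (D1 D2 D3 : set 'rV[R]_n) (eps : R)
  (u1 u2 u3 : 'rV[R]_n) : Prop :=
  exists p1 p2 p3,
    is_proj D1 u3 p1 /\ is_proj D2 u1 p2 /\ is_proj D3 u2 p3 /\
    u1 = u3 + eps *: (p1 - u3) /\
    u2 = u1 + eps *: (p2 - u1) /\
    u3 = u2 + eps *: (p3 - u2).

Definition pt3 (x y z : R) : 'rV[R]_3 :=
  \row_(i < 3) match val i with 0%N => x | 1%N => y | _ => z end.
Definition pt2 (x y : R) : 'rV[R]_2 :=
  \row_(i < 2) match val i with 0%N => x | _ => y end.
End Defs.

(* Main.v *)
Require Import Defs.
From HB Require Import structures.
From mathcomp Require Import all_boot all_order all_algebra.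
From mathcomp Require Import all_classical all_reals all_analysis.
From mathcomp Require Import ring lra.
Set Implicit Arguments. Unset Strict Implicit. Unset Printing Implicit Defensive.
Import Order.TTheory GRing.Theory Num.Theory.
Import numFieldNormedType.Exports.
Local Open Scope classical_set_scope.
Local Open Scope ring_scope.

Section Helpers.
Variable R : realType.

Definition sq n (v : 'rV[R]_n) : R := \sum_(i < n) v ord0 i ^+ 2.
Definition dot n (u v : 'rV[R]_n) : R := \sum_(i < n) u ord0 i * v ord0 i.

Lemma sq_ge0 n (v : 'rV[R]_n) : 0 <= sq v.
Proof. by apply: sumr_ge0 => i _; exact: sqr_ge0. Qed.

Lemma enorm_le n (u v : 'rV[R]_n) : (enorm u <= enorm v) = (sq u <= sq v).
Proof. by rewrite /enorm ler_sqrt // sq_ge0. Qed.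

Lemma sq_expand n (u d : 'rV[R]_n) (l : R) :
  sq (u - l *: d) = sq u - 2 * l * dot u d + l ^+ 2 * sq d.
Proof.
rewrite /sq /dot !mulr_sumr -sumrB -big_split /=.
by apply: eq_bigr => i _; rewrite !mxE; ring.
Qed.

Lemma real_core (A B : R) : 0 <= B ->
  (forall l, 0 < l <= 1 -> 0 <= - (2 * l * A) + l ^+ 2 * B) -> A <= 0.
Proof.
move=> B0 H; rewrite leNgt; apply/negP => A0.
have AB : 0 < A + B by lra.
pose l := A / (A + B).
have l0 : 0 < l by rewrite /l divr_gt0.
have l1 : l <= 1 by rewrite /l ler_pdivrMr // mul1r; lra.
have lAB : l * (A + B) = A by rewrite /l mulfVK // gt_eqF.
have := H l; rewrite l0 l1 => /(_ isT).
nra.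
Qed.

Lemma conv_sub n (A : set 'rV[R]_n) x : A x -> conv_hull A x.
Proof.
move=> Ax; exists 1%N, (fun=> 1), (fun=> x); split => //; split.
  by rewrite big_ord1.
by split => //; rewrite big_ord1 scale1r.
Qed.

Lemma conv_mix n (A : set 'rV[R]_n) x y l : 0 <= l <= 1 ->
  conv_hull A x -> conv_hull A y -> conv_hull A (x + l *: (y - x)).
Proof.
move=> /andP[l0 l1] [m1 [w1 [a1 [w10 [w11 [a1A ->]]]]]] [m2 [w2 [a2 [w20 [w21 [a2A ->]]]]]].
exists (m1 + m2)%N, (fun i => match fintype.split i with inl j => (1 - l) * w1 j | inr j => l * w2 j end),
  (fun i => match fintype.split i with inl j => a1 j | inr j => a2 j end).
split; first by move=> i; case: fintype.split => j; apply: mulr_ge0 => //; lra.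
split.
  rewrite big_split_ord /=.
  under eq_bigr do rewrite (unsplitK (inl _) : fintype.split (lshift _ _) = inl _).
  under [X in _ + X]eq_bigr do rewrite (unsplitK (inr _) : fintype.split (rshift _ _) = inr _).
  by rewrite -!mulr_sumr w11 w21; ring.
split; first by move=> i; case: fintype.split.
rewrite big_split_ord /=.
under [X in _ = X + _]eq_bigr do rewrite (unsplitK (inl _) : fintype.split (lshift _ _) = inl _).
under [X in _ = _ + X]eq_bigr do rewrite (unsplitK (inr _) : fintype.split (rshift _ _) = inr _).
under [X in _ = X + _]eq_bigr do rewrite -scalerA.
under [X in _ = _ + X]eq_bigr do rewrite -scalerA.
rewrite -!scaler_sumr scalerBl scale1r scalerBr; set S1 := \sum_(i < m1) _; set S2 := \sum_(i < m2) _.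
by rewrite addrA addrAC.
Qed.

Lemma closure_map (T U : topologicalType) (f : T -> U) (A : set T) (B : set U) x :
  continuous f -> (forall a, A a -> B (f a)) -> closure A x -> closure B (f x).
Proof.
move=> fc AB clx N Nfx.
have : nbhs x (f @^-1` N) by exact: fc.
move=> /clx [a [Aa Na]].
by exists (f a); split => //; apply: AB.
Qed.

Lemma mix_continuous n (y : 'rV[R]_n) l : continuous (fun z : 'rV[R]_n => z + l *: (y - z)).
Proof.
move=> z.
apply: (@cvgD R 'rV[R]_n _ (nbhs z) _ (fun z => z) (fun z => l *: (y - z)) z (l *: (y - z))).
  exact: cvg_id.
apply: (@cvgZl_tmp R 'rV[R]_n _ (nbhs z) _ l (fun z => y - z)).
apply: (@cvgB R 'rV[R]_n _ (nbhs z) _ (fun=> y) (fun z => z)); [exact: cvg_cst | exact: cvg_id].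
Qed.

Lemma mix_continuous2 n (x : 'rV[R]_n) l : continuous (fun y : 'rV[R]_n => x + l *: (y - x)).
Proof.
move=> z.
apply: (@cvgD R 'rV[R]_n _ (nbhs z) _ (fun=> x) (fun y => l *: (y - x)) x (l *: (z - x))).
  exact: cvg_cst.
apply: (@cvgZl_tmp R 'rV[R]_n _ (nbhs z) _ l (fun y => y - x)).
apply: (@cvgB R 'rV[R]_n _ (nbhs z) _ (fun y => y) (fun=> x)); [exact: cvg_id | exact: cvg_cst].
Qed.

Lemma cl_mix n (A : set 'rV[R]_n) x y l : 0 <= l <= 1 ->
  cl_conv_hull A x -> cl_conv_hull A y -> cl_conv_hull A (x + l *: (y - x)).
Proof.
move=> l01 clx cly.
have step1 : forall y', conv_hull A y' -> cl_conv_hull A (x + l *: (y' - x)).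
  move=> y' cy'.
  have := @closure_map _ _ (fun z : 'rV[R]_n => z + l *: (y' - z)) (conv_hull A) (conv_hull A) x
    (@mix_continuous _ _ _) _ clx; apply.
  by move=> a ca; apply: conv_mix.
have := @closure_map _ _ (fun y : 'rV[R]_n => x + l *: (y - x)) (conv_hull A) (closure (conv_hull A)) y
    (@mix_continuous2 _ _ _) step1 cly.
by rewrite -(closure_id _).1 //; exact: closed_closure.
Qed.

Definition lin n (c : 'I_n -> R) (x : 'rV[R]_n) : R := \sum_(i < n) c i * x ord0 i.

Lemma lin_continuous n (c : 'I_n -> R) : continuous (lin c).
Proof.
rewrite /lin; elim: (index_enum _) => [|i s IH].
  under eq_fun do rewrite big_nil; exact: cst_continuous.
under eq_fun do rewrite big_cons.
move=> z.
apply: (@cvgD R R^o _ (nbhs z) _ (fun x : 'rV[R]_n => c i * x ord0 i)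
  (fun x => \sum_(j <- s) c j * x ord0 j)); last exact: IH.
apply: (@cvgM R _ (nbhs z) _ (fun=> c i) (fun x : 'rV[R]_n => x ord0 i)); first exact: cvg_cst.
exact: coord_continuous.
Qed.

Lemma conv_half n (A : set 'rV[R]_n) c b M :
  (forall x, A x -> lin c x + b <= M) -> forall x, conv_hull A x -> lin c x + b <= M.
Proof.
move=> HA x [m [w [a [w0 [w1 [aA ->]]]]]].
have -> : lin c (\sum_(i < m) w i *: a i) + b = \sum_(i < m) w i * (lin c (a i) + b).
  rewrite /lin; under eq_bigr do rewrite summxE mulr_sumr.
  rewrite exchange_big /= -{1}[b]mul1r -{1}w1 mulr_suml -big_split /=.
  apply: eq_bigr => i _; rewrite mulrDr mulr_sumr; congr (_ + _).
  by apply: eq_bigr => j _; rewrite !mxE mulrCA.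
rewrite -[M]mul1r -w1 mulr_suml; apply: ler_sum => i _.
by apply: ler_wpM2l => //; apply: HA.
Qed.

Lemma cl_half n (A : set 'rV[R]_n) c b M :
  (forall x, A x -> lin c x + b <= M) -> forall x, cl_conv_hull A x -> lin c x + b <= M.
Proof.
move=> HA x clx.
have cl : closed [set y : 'rV[R]_n | lin c y + b <= M].
  have -> : [set y : 'rV[R]_n | lin c y + b <= M] = (fun y => lin c y + b) @^-1` [set r | r <= M].
    by [].
  apply: preimage_closed; last exact: closed_le.
  move=> y _; apply: (@cvgD R R^o _ (nbhs y) _ (lin c) (fun=> b)); last exact: cvg_cst.
  exact: lin_continuous.
have : closure (conv_hull A) `<=` closure [set y : 'rV[R]_n | lin c y + b <= M].
  by apply: closureS => y; apply: conv_half.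
by move/(_ x clx); rewrite -((closure_id _).1 cl).
Qed.

Lemma lin_delta n (i : 'I_n) (x : 'rV[R]_n) : lin (fun j => (j == i)%:R) x = x ord0 i.
Proof.
rewrite /lin (bigD1 i) //= eqxx mul1r big1 ?addr0 // => j /negbTE ->.
by rewrite mul0r.
Qed.

Lemma lin_deltaN n (i : 'I_n) (x : 'rV[R]_n) : lin (fun j => - (j == i)%:R) x = - x ord0 i.
Proof.
rewrite /lin (bigD1 i) //= eqxx mulN1r big1 ?addr0 // => j /negbTE ->.
by rewrite oppr0 mul0r.
Qed.

Lemma cl_coord_le n (A : set 'rV[R]_n) i M :
  (forall x, A x -> x ord0 i <= M) -> forall x, cl_conv_hull A x -> x ord0 i <= M.
Proof.
move=> HA x clx.
have H : forall y, A y -> lin (fun j => (j == i)%:R) y + 0 <= M.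
  by move=> y Ay; rewrite lin_delta addr0; apply: HA.
by have := cl_half H clx; rewrite lin_delta addr0.
Qed.

Lemma cl_coord_ge n (A : set 'rV[R]_n) i M :
  (forall x, A x -> M <= x ord0 i) -> forall x, cl_conv_hull A x -> M <= x ord0 i.
Proof.
move=> HA x clx.
have H : forall y, A y -> lin (fun j => - (j == i)%:R) y + 0 <= - M.
  by move=> y Ay; rewrite lin_deltaN addr0 lerN2; apply: HA.
by have := cl_half H clx; rewrite lin_deltaN addr0 lerN2.
Qed.

Lemma cl_compact n (A : set 'rV[R]_n) :
  (forall x, A x -> forall i, -1 <= x ord0 i <= 1) -> compact (cl_conv_hull A).
Proof.
move=> HA.
have Bc : compact [set v : 'rV[R]_n | forall i, `[-1, 1]%classic (v ord0 i)].
  by apply: (@rV_compact _ _ (fun=> `[(-1 : R), 1]%classic)) => _; exact: segment_compact.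
apply: (subclosed_compact _ Bc); first exact: closed_closure.
move=> x clx i /=; rewrite in_itv /=; apply/andP; split.
  by apply: (cl_coord_ge _ clx) => y /HA /(_ i) /andP[].
by apply: (cl_coord_le _ clx) => y /HA /(_ i) /andP[].
Qed.

Definition fij n (i j : 'I_n) (u v : R) (q : 'rV[R]_n) : R :=
  (u - q ord0 i) ^+ 2 + (v - q ord0 j) ^+ 2.

Lemma fij_continuous n (i j : 'I_n) u v : continuous (fij i j u v).
Proof.
move=> z; rewrite /fij.
have ci : forall k : 'I_n, continuous (fun q : 'rV[R]_n => (u - q ord0 k)).
  move=> k y.
  apply: (@cvgB R R^o _ (nbhs y) _ (fun=> u) (fun q : 'rV[R]_n => q ord0 k)); first exact: cvg_cst.
  exact: coord_continuous.
have sq2 : forall k : 'I_n, forall w, continuous (fun q : 'rV[R]_n => (w - q ord0 k) ^+ 2).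
  move=> k w y; rewrite /GRing.exp /=.
  apply: (@cvgM R _ (nbhs y) _ (fun q : 'rV[R]_n => w - q ord0 k) (fun q : 'rV[R]_n => w - q ord0 k)).
    apply: (@cvgB R R^o _ (nbhs y) _ (fun=> w) (fun q : 'rV[R]_n => q ord0 k)); first exact: cvg_cst.
    exact: coord_continuous.
  apply: (@cvgB R R^o _ (nbhs y) _ (fun=> w) (fun q : 'rV[R]_n => q ord0 k)); first exact: cvg_cst.
  exact: coord_continuous.
apply: (@cvgD R R^o _ (nbhs z) _ (fun q : 'rV[R]_n => (u - q ord0 i) ^+ 2)
  (fun q : 'rV[R]_n => (v - q ord0 j) ^+ 2)); [exact: sq2 | exact: sq2].
Qed.

Lemma exists_min n (A : set 'rV[R]_n) (i j : 'I_n) u v :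
  (forall x, A x -> forall k, -1 <= x ord0 k <= 1) -> A !=set0 ->
  exists P, cl_conv_hull A P /\ forall q, cl_conv_hull A q -> fij i j u v P <= fij i j u v q.
Proof.
move=> HA [a Aa].
have [P PA Pmin] := @EVT_min_rV R n (fij i j u v) (cl_conv_hull A)
  (ex_intro _ a (subset_closure (conv_sub Aa))) (cl_compact HA)
  (continuous_subspaceT (@fij_continuous n i j u v)).
exists P; split; first by move: PA; rewrite inE.
by move=> q Aq; apply: Pmin; rewrite inE.
Qed.

Lemma VI_min n (A : set 'rV[R]_n) (i j : 'I_n) u v P :
  cl_conv_hull A P -> (forall q, cl_conv_hull A q -> fij i j u v P <= fij i j u v q) ->
  forall q, cl_conv_hull A q ->
    (u - P ord0 i) * (q ord0 i - P ord0 i) + (v - P ord0 j) * (q ord0 j - P ord0 j) <= 0.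
Proof.
move=> AP Pmin q Aq.
apply: (@real_core _ ((q ord0 i - P ord0 i) ^+ 2 + (q ord0 j - P ord0 j) ^+ 2)).
  by apply: addr_ge0; exact: sqr_ge0.
move=> l /andP[l0 l1].
have := Pmin _ (cl_mix (l := l) _ AP Aq); rewrite l1 ltW // => /(_ isT).
rewrite /fij !mxE => H; nra.
Qed.

Lemma VI_of_proj n (A : set 'rV[R]_n) u p :
  is_proj (cl_conv_hull A) u p -> forall q, cl_conv_hull A q -> dot (u - p) (q - p) <= 0.
Proof.
move=> [Ap Pmin] q Aq.
apply: (@real_core _ (sq (q - p))); first exact: sq_ge0.
move=> l /andP[l0 l1].
have := Pmin _ (cl_mix (l := l) _ Ap Aq); rewrite l1 ltW // => /(_ isT).
rewrite enorm_le (_ : u - (p + l *: (q - p)) = (u - p) - l *: (q - p)); last first.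
  by rewrite opprD addrA.
by rewrite sq_expand; lra.
Qed.

Lemma proj_of_VI n (C : set 'rV[R]_n) u p :
  C p -> (forall q, C q -> dot (u - p) (q - p) <= 0) -> is_proj C u p.
Proof.
move=> Cp H; split => // q Cq; rewrite enorm_le.
rewrite (_ : u - q = (u - p) - 1 *: (q - p)); last first.
  by rewrite scale1r opprB addrA subrK.
rewrite sq_expand expr1n mul1r mulr1; have := H q Cq; have := sq_ge0 (q - p); lra.
Qed.

Definition i0 : 'I_3 := @Ordinal 3 0 isT.
Definition i1 : 'I_3 := @Ordinal 3 1 isT.
Definition i2 : 'I_3 := @Ordinal 3 2 isT.
Definition j0 : 'I_2 := @Ordinal 2 0 isT.
Definition j1 : 'I_2 := @Ordinal 2 1 isT.

Lemma sum3 (F : 'I_3 -> R) : \sum_(i < 3) F i = F i0 + F i1 + F i2.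
Proof.
rewrite !big_ord_recl big_ord0 addr0 addrA; congr (F _ + F _ + F _); exact: val_inj.
Qed.

Lemma sum2 (F : 'I_2 -> R) : \sum_(i < 2) F i = F j0 + F j1.
Proof.
rewrite !big_ord_recl big_ord0 addr0; congr (F _ + F _); exact: val_inj.
Qed.

Lemma rV3_eq (u v : 'rV[R]_3) : u ord0 i0 = v ord0 i0 -> u ord0 i1 = v ord0 i1 ->
  u ord0 i2 = v ord0 i2 -> u = v.
Proof.
move=> h0 h1 h2; apply/rowP => -[[|[|[|k]]] Hk] //.
- by rewrite (_ : Ordinal Hk = i0) //; exact: val_inj.
- by rewrite (_ : Ordinal Hk = i1) //; exact: val_inj.
- by rewrite (_ : Ordinal Hk = i2) //; exact: val_inj.
Qed.

Lemma rV2_eq (u v : 'rV[R]_2) : u ord0 j0 = v ord0 j0 -> u ord0 j1 = v ord0 j1 -> u = v.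
Proof.
move=> h0 h1; apply/rowP => -[[|[|k]] Hk] //.
- by rewrite (_ : Ordinal Hk = j0) //; exact: val_inj.
- by rewrite (_ : Ordinal Hk = j1) //; exact: val_inj.
Qed.

Lemma dot3 (u v : 'rV[R]_3) : dot u v =
  u ord0 i0 * v ord0 i0 + u ord0 i1 * v ord0 i1 + u ord0 i2 * v ord0 i2.
Proof. by rewrite /dot sum3. Qed.
Lemma sq3 (u : 'rV[R]_3) : sq u = u ord0 i0 ^+ 2 + u ord0 i1 ^+ 2 + u ord0 i2 ^+ 2.
Proof. by rewrite /sq sum3. Qed.
Lemma dot2 (u v : 'rV[R]_2) : dot u v = u ord0 j0 * v ord0 j0 + u ord0 j1 * v ord0 j1.
Proof. by rewrite /dot sum2. Qed.
Lemma sq2 (u : 'rV[R]_2) : sq u = u ord0 j0 ^+ 2 + u ord0 j1 ^+ 2.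
Proof. by rewrite /sq sum2. Qed.

Lemma pt3E (x y z : R) : [/\ pt3 x y z ord0 i0 = x, pt3 x y z ord0 i1 = y & pt3 x y z ord0 i2 = z].
Proof. by rewrite !mxE. Qed.
Lemma pt2E (x y : R) : pt2 x y ord0 j0 = x /\ pt2 x y ord0 j1 = y.
Proof. by rewrite !mxE. Qed.

Lemma cl_half3 (A : set 'rV[R]_3) a b c d M :
  (forall x, A x -> a * x ord0 i0 + b * x ord0 i1 + c * x ord0 i2 + d <= M) ->
  forall x, cl_conv_hull A x -> a * x ord0 i0 + b * x ord0 i1 + c * x ord0 i2 + d <= M.
Proof.
pose co := fun i : 'I_3 => match val i with 0%N => a | 1%N => b | _ => c end.
have E : forall x : 'rV[R]_3, lin co x = a * x ord0 i0 + b * x ord0 i1 + c * x ord0 i2.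
  by move=> x; rewrite /lin sum3.
move=> HA x clx; rewrite -E; apply: (cl_half (A := A)) => // y Ay; rewrite E; exact: HA.
Qed.

Lemma cl_half2 (A : set 'rV[R]_2) a b d M :
  (forall x, A x -> a * x ord0 j0 + b * x ord0 j1 + d <= M) ->
  forall x, cl_conv_hull A x -> a * x ord0 j0 + b * x ord0 j1 + d <= M.
Proof.
pose co := fun i : 'I_2 => match val i with 0%N => a | _ => b end.
have E : forall x : 'rV[R]_2, lin co x = a * x ord0 j0 + b * x ord0 j1.
  by move=> x; rewrite /lin sum2.
move=> HA x clx; rewrite -E; apply: (cl_half (A := A)) => // y Ay; rewrite E; exact: HA.
Qed.

Lemma conv_half3 (A : set 'rV[R]_3) a b c d M :
  (forall x, A x -> a * x ord0 i0 + b * x ord0 i1 + c * x ord0 i2 + d <= M) ->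
  forall x, conv_hull A x -> a * x ord0 i0 + b * x ord0 i1 + c * x ord0 i2 + d <= M.
Proof.
pose co := fun i : 'I_3 => match val i with 0%N => a | 1%N => b | _ => c end.
have E : forall x : 'rV[R]_3, lin co x = a * x ord0 i0 + b * x ord0 i1 + c * x ord0 i2.
  by move=> x; rewrite /lin sum3.
move=> HA x clx; rewrite -E; apply: (conv_half (A := A)) => // y Ay; rewrite E; exact: HA.
Qed.

Lemma absmul (b c : R) : `|c| <= 1 -> b * c <= `|b|.
Proof. by move=> hc; rewrite (le_trans (ler_norm _)) // normrM ler_piMr. Qed.

Lemma finite_argmax (g : nat -> R) n : exists k1, (1 <= k1 <= n.+1)%N /\
  forall k, (1 <= k <= n.+1)%N -> g k <= g k1.
Proof.
elim: n => [|n [k1 [hk1 Hk1]]].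
  by exists 1%N; split => // k /andP[a b]; have -> : k = 1%N by apply/eqP; rewrite eqn_leq a b.
have [le|lt] := leP (g n.+2) (g k1).
  exists k1; split; first by move: hk1 => /andP[-> /leqW ->].
  move=> k /andP[a b]; rewrite leq_eqVlt in b; case/orP: b => [/eqP -> //|b].
  by apply: Hk1; rewrite a.
exists n.+2; split; first by rewrite leqnn. move=> k /andP[a b]; rewrite leq_eqVlt in b; case/orP: b => [/eqP -> //|b].
by apply: le_trans (ltW lt); apply: Hk1; rewrite a.
Qed.

Lemma finite_gap (g : nat -> R) M n : exists2 d, 0 < d &
  forall k, (k < n)%N -> g k < M -> g k <= M - d.
Proof.
elim: n => [|n [d d0 Hd]]; first by exists 1 => // k.
have [lt|ge] := ltP (g n) M.
  exists (Num.min d (M - g n)); first by rewrite lt_min d0 subr_gt0.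
  move=> k; rewrite ltnS leq_eqVlt => /orP[/eqP -> _|kn gk].
    have : Num.min d (M - g n) <= M - g n by rewrite ge_min lexx orbT.
    lra.
  have : Num.min d (M - g n) <= d by rewrite ge_min lexx.
  have := Hd k kn gk; lra.
exists d => // k; rewrite ltnS leq_eqVlt => /orP[/eqP -> |kn gk]; last exact: Hd.
by move=> /lt_geF; rewrite ge.
Qed.

Lemma three_points (a1 a2 b1 b2 c1 c2 n1 n2 : R) :
  a1 ^+ 2 + a2 ^+ 2 = 1 -> b1 ^+ 2 + b2 ^+ 2 = 1 -> c1 ^+ 2 + c2 ^+ 2 = 1 ->
  n1 * a1 + n2 * a2 = n1 * b1 + n2 * b2 -> n1 * a1 + n2 * a2 = n1 * c1 + n2 * c2 ->
  n2 != 0 -> a1 != b1 -> a1 != c1 -> b1 != c1 -> False.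
Proof.
move=> ha hb hc eab eac n20 ab ac bc.
have key : forall x1 x2, x1 ^+ 2 + x2 ^+ 2 = 1 -> n1 * a1 + n2 * a2 = n1 * x1 + n2 * x2 ->
    a1 != x1 -> n2 * (a1 + x1) = n1 * (a2 + x2).
  move=> x1 x2 hx ex ax.
  have : (a1 - x1) * (n2 * (a1 + x1) - n1 * (a2 + x2)) = 0.
    have e1 : n1 * (a1 - x1) = - (n2 * (a2 - x2)) by lra.
    have e2 : (a1 - x1) * (a1 + x1) = - ((a2 - x2) * (a2 + x2)).
      by rewrite -!subr_sqr; lra.
    rewrite (_ : _ * _ = n2 * ((a1 - x1) * (a1 + x1)) - (a2 + x2) * (n1 * (a1 - x1))); last by ring.
    rewrite e1 e2; ring.
  by move/eqP; rewrite mulf_eq0 subr_eq0 (negbTE ax) /= subr_eq0 => /eqP.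
have kb := key _ _ hb eab ab; have kc := key _ _ hc eac ac.
have e3 : n2 * (b1 - c1) = n1 * (b2 - c2) by lra.
have e4 : n1 * (b1 - c1) = - (n2 * (b2 - c2)) by lra.
have : (n1 ^+ 2 + n2 ^+ 2) * (b1 - c1) = 0.
  rewrite mulrDl !expr2 -!mulrA e3 e4; ring.
move/eqP; rewrite mulf_eq0 subr_eq0 (negbTE bc) orbF => /eqP h.
have : n2 ^+ 2 > 0 by rewrite exprn_even_gt0.
have := sqr_ge0 n1; lra.
Qed.

Definition Dn (e : R) := 1 + (1 - e) + (1 - e) ^+ 2.
Definition num (e A B Q : R) := (1 - e) ^+ 2 * Q + (1 - e) * A + B.

Lemma Dn_gt0 e : 0 < e < 1 -> 0 < Dn e.
Proof. by move=> /andP[e0 e1]; rewrite /Dn; nra. Qed.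

Lemma cyc_solve (e V1 V2 V3 A B Q : R) : 0 < e < 1 ->
  V1 = V3 + e * (A - V3) -> V2 = V1 + e * (B - V1) -> V3 = V2 + e * (Q - V2) ->
  V2 = num e A B Q / Dn e.
Proof.
move=> he E1 E2 E3.
have D0 := Dn_gt0 he.
have h := E2; rewrite E1 E3 in h.
move: h; set X := (X in _ = X) => h.
have : e * (V2 * Dn e - num e A B Q) = 0.
  have -> : e * (V2 * Dn e - num e A B Q) = V2 - X by rewrite /X /Dn /num; ring.
  by rewrite -h subrr.
move/eqP; rewrite mulf_eq0 subr_eq0 => /orP[/eqP e0|/eqP h2].
  by move: he; rewrite e0 ltxx.
by rewrite -h2 mulfK // gt_eqF.
Qed.

Lemma cyc_exists (e A B Q : R) : 0 < e < 1 ->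
  let V2 := num e A B Q / Dn e in
  let V3 := V2 + e * (Q - V2) in
  let V1 := V3 + e * (A - V3) in
  V2 = V1 + e * (B - V1).
Proof.
move=> he V2 V3 V1.
have D0 := Dn_gt0 he.
rewrite /V1 /V3 /V2 /num; move: D0; rewrite /Dn => D0; field.
by rewrite gt_eqF.
Qed.

Lemma clip_lemma (z z' : R) : -1 <= z' <= 1 ->
  (forall y, -1 <= y <= 1 -> (z - z') ^+ 2 <= (z - y) ^+ 2) ->
  (-1 <= z <= 1 /\ z' = z) \/ (1 < z /\ z' = 1) \/ (z < -1 /\ z' = -1).
Proof.
move=> /andP[z'1 z'2] H.
have [z1|z1] := ltP 1 z.
  right; left; split => //.
  have h1 : -1 <= (1:R) <= 1 by apply/andP; split; lra.
  have := H 1 h1; nra.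
have [z2|z2] := ltP z (-1).
  right; right; split => //.
  have h1 : -1 <= (-1:R) <= 1 by apply/andP; split; lra.
  have := H (-1) h1; nra.
have hz : -1 <= z <= 1 by rewrite z1 z2.
left; split => //.
have := H z hz; rewrite subrr expr0n /= => h.
have : (z - z') ^+ 2 = 0 by apply/eqP; rewrite eq_le h sqr_ge0.
by move/eqP; rewrite sqrf_eq0 subr_eq0 => /eqP.
Qed.

Lemma zcycle (e z1 z2 z3 a b q : R) : 0 < e < 1 ->
  z1 = z3 + e * (a - z3) -> z2 = z1 + e * (b - z1) -> z3 = z2 + e * (q - z2) ->
  -1 <= a <= 1 -> -1 <= b <= 1 -> -1 <= q <= 1 ->
  (forall y, -1 <= y <= 1 -> (z3 - a) ^+ 2 <= (z3 - y) ^+ 2) ->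
  (forall y, -1 <= y <= 1 -> (z1 - b) ^+ 2 <= (z1 - y) ^+ 2) ->
  [/\ a = z3, z1 = z3, b = z3, z2 = z3 & q = z3].
Proof.
move=> /andP[e0 e1] E1 E2 E3 ha hb /andP[q1 q2] Ha Hb.
have [[/andP[h1 h2] ea]|[[h ea]|[h ea]]] := clip_lemma ha Ha; subst a.
- have z13 : z1 = z3 by rewrite E1 subrr mulr0 addr0.
  rewrite z13 in Hb E2.
  have [[_ eb]|[[h eb]|[h eb]]] := clip_lemma hb Hb; subst b.
  + have z23 : z2 = z3 by rewrite E2 subrr mulr0 addr0.
    have : e * (q - z3) = 0 by rewrite -z23; lra.
    move/eqP; rewrite mulf_eq0 (gt_eqF e0) subr_eq0 /= => /eqP ->; split => //.
  + lra.
  + lra.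
- exfalso.
  have cl : forall X, 0 < X -> (1 - e) * X < X by move=> X X0; nra.
  have cp : forall X, 0 < X -> 0 < (1 - e) * X by move=> X X0; nra.
  have h1 : z1 - 1 = (1 - e) * (z3 - 1) by rewrite E1; ring.
  have z1g : 0 < z1 - 1 by rewrite h1; apply: cp; lra.
  have [[/andP[_ _] eb]|[[h' eb]|[h' eb]]] := clip_lemma hb Hb; subst b; try lra.
  have h2 : z2 - 1 = (1 - e) * (z1 - 1) by rewrite E2; ring.
  have h3 : z3 - 1 = (1 - e) * (z2 - 1) + e * (q - 1) by rewrite E3; ring.
  have h4 : e * (q - 1) <= 0 by nra.
  have A1 := cl _ z1g; have z2g : 0 < z2 - 1 by rewrite h2; apply: cp.
  have A2 := cl _ z2g; have A3 := cl (z3 - 1) ltac:(lra); lra.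
- exfalso.
  have cl : forall X, 0 < X -> (1 - e) * X < X by move=> X X0; nra.
  have cp : forall X, 0 < X -> 0 < (1 - e) * X by move=> X X0; nra.
  have h1 : - 1 - z1 = (1 - e) * (- 1 - z3) by rewrite E1; ring.
  have z1g : 0 < - 1 - z1 by rewrite h1; apply: cp; lra.
  have [[/andP[_ _] eb]|[[h' eb]|[h' eb]]] := clip_lemma hb Hb; subst b; try lra.
  have h2 : - 1 - z2 = (1 - e) * (- 1 - z1) by rewrite E2; ring.
  have h3 : - 1 - z3 = (1 - e) * (- 1 - z2) + e * (- 1 - q) by rewrite E3; ring.
  have h4 : e * (- 1 - q) <= 0 by nra.
  have A1 := cl _ z1g; have z2g : 0 < - 1 - z2 by rewrite h2; apply: cp.
  have A2 := cl _ z2g; have A3 := cl (- 1 - z3) ltac:(lra); lra.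
Qed.

End Helpers.

Section Seg.
Variable R : realType.

Lemma seg_mem (a b : R) (q : 'rV[R]_3) : conv_hull [set pt3 a b 1; pt3 a b (-1)] q ->
  [/\ q ord0 i0 = a, q ord0 i1 = b, -1 <= q ord0 i2 & q ord0 i2 <= 1].
Proof.
move=> Cq.
have gen : forall (c0 c1 c2 d M : R), (forall z : R, -1 <= z <= 1 -> c0 * a + c1 * b + c2 * z + d <= M) ->
    c0 * q ord0 i0 + c1 * q ord0 i1 + c2 * q ord0 i2 + d <= M.
  move=> c0 c1 c2 d M H; apply: (conv_half3 _ Cq) => x [->|->]; rewrite !mxE /=; apply: H;
    apply/andP; split; lra.
split.
- apply/eqP; rewrite eq_le; apply/andP; split.
    suff : 1 * q ord0 i0 + 0 * q ord0 i1 + 0 * q ord0 i2 + 0 <= a by lra.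
    by apply: gen => z _; lra.
  suff : (-1) * q ord0 i0 + 0 * q ord0 i1 + 0 * q ord0 i2 + 0 <= - a by lra.
  by apply: gen => z _; lra.
- apply/eqP; rewrite eq_le; apply/andP; split.
    suff : 0 * q ord0 i0 + 1 * q ord0 i1 + 0 * q ord0 i2 + 0 <= b by lra.
    by apply: gen => z _; lra.
  suff : 0 * q ord0 i0 + (-1) * q ord0 i1 + 0 * q ord0 i2 + 0 <= - b by lra.
  by apply: gen => z _; lra.
- suff : 0 * q ord0 i0 + 0 * q ord0 i1 + (-1) * q ord0 i2 + 0 <= 1 by lra.
  by apply: gen => z /andP[]; lra.
- suff : 0 * q ord0 i0 + 0 * q ord0 i1 + 1 * q ord0 i2 + 0 <= 1 by lra.
  by apply: gen => z /andP[]; lra.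
Qed.

Lemma seg_pt (a b z : R) : -1 <= z <= 1 -> conv_hull [set pt3 a b 1; pt3 a b (-1)] (pt3 a b z).
Proof.
move=> /andP[z1 z2].
have -> : pt3 a b z = pt3 a b 1 + ((1 - z) / 2) *: (pt3 a b (-1) - pt3 a b 1).
  by apply: rV3_eq; rewrite !mxE /=; field.
apply: conv_mix; first by apply/andP; split; lra.
  by apply: conv_sub; left.
by apply: conv_sub; right.
Qed.

Lemma seg_proj (a b : R) (u : 'rV[R]_3) : -1 <= u ord0 i2 <= 1 ->
  is_proj (conv_hull [set pt3 a b 1; pt3 a b (-1)]) u (pt3 a b (u ord0 i2)).
Proof.
move=> hu; split; first exact: seg_pt.
move=> q /seg_mem [q0 q1 _ _]; rewrite enorm_le !sq3 !mxE /= q0 q1 subrr expr0n /= addr0.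
by have := sqr_ge0 (u ord0 i2 - q ord0 i2); lra.
Qed.

Lemma seg_min (a b : R) (u p : 'rV[R]_3) : is_proj (conv_hull [set pt3 a b 1; pt3 a b (-1)]) u p ->
  [/\ p = pt3 a b (p ord0 i2), -1 <= p ord0 i2 <= 1 &
  forall y : R, -1 <= y <= 1 -> (u ord0 i2 - p ord0 i2) ^+ 2 <= (u ord0 i2 - y) ^+ 2].
Proof.
move=> [Cp Pm]; have [p0 p1 p2 p3] := seg_mem Cp.
have pe : p = pt3 a b (p ord0 i2) by apply: rV3_eq; rewrite !mxE.
split => //; first by rewrite p2 p3.
move=> y hy; have := Pm _ (seg_pt a b hy).
rewrite enorm_le !sq3 !mxE /= p0 p1; lra.
Qed.

Lemma kappa_id (e X Y a b : R) : 0 < e < 1 ->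
  (num e (-2) 2 X / Dn e - X) * a + (num e 2 2 Y / Dn e - Y) * b
  = (2 - e) / Dn e * ((2 * e / (2 - e) - X) * a + (2 - Y) * b).
Proof.
move=> he; have D0 := Dn_gt0 he; have e2 : 2 - e != 0 by apply: lt0r_neq0; case/andP: he => *; lra.
move: D0; rewrite /num /Dn => D0; field; rewrite e2 /=; exact: lt0r_neq0.
Qed.

Lemma kappa_gt0 (e : R) : 0 < e < 1 -> 0 < (2 - e) / Dn e.
Proof. by move=> he; apply: divr_gt0; [case/andP: he => *; lra | exact: Dn_gt0]. Qed.

End Seg.

Section Main.
Variable R : realType.
Variable t : nat -> R.
Hypothesis ht_incr : forall k : nat, (1 <= k)%N -> t k < t k.+1.
Hypothesis ht1 : t 1%N = pi / 4.
Hypothesis ht_lim : t @ \oo --> pi / 2.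

Lemma t_mono k j : (1 <= k)%N -> (k < j)%N -> t k < t j.
Proof.
move=> k1; elim: j => // j IH; rewrite ltnS leq_eqVlt => /orP[/eqP <-|kj].
  exact: ht_incr.
apply: lt_trans (IH kj) _; apply: ht_incr; exact: leq_trans k1 (ltnW kj).
Qed.

Lemma t_ge k : (1 <= k)%N -> pi / 4 <= t k.
Proof.
rewrite leq_eqVlt => /orP[/eqP <-|k1]; first by rewrite ht1.
by rewrite -ht1; apply/ltW/t_mono.
Qed.

Lemma t_lt k : (1 <= k)%N -> t k < pi / 2.
Proof.
move=> k1; apply: (lt_le_trans (ht_incr k1)).
apply: (closed_cvg (fun x => t k.+1 <= x) (@closed_ge R (t k.+1)) _ (pi / 2) ht_lim).
exists k.+1 => // n /= hn.
rewrite leq_eqVlt in hn; case/orP: hn => [/eqP -> //|hn].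
by apply/ltW/t_mono => //; exact: leq_trans k1 (leqnSn k).
Qed.

Lemma pi4_gt0 : 0 < pi / 4 :> R.
Proof. by apply: divr_gt0 => //; exact: pi_gt0. Qed.

Lemma cos_t_gt0 k : (1 <= k)%N -> 0 < cos (t k).
Proof.
move=> k1; apply: cos_gt0_pihalf; have := t_ge k1; have := t_lt k1.
have := pi4_gt0; have := @pi_gt0 R; move=> *; apply/andP; split; lra.
Qed.

Lemma sin_t_gt0 k : (1 <= k)%N -> 0 < sin (t k).
Proof.
move=> k1; apply: sin_gt0_pihalf; have := t_ge k1; have := t_lt k1.
have := pi4_gt0; move=> *; apply/andP; split; lra.
Qed.

Lemma cos_t_inj k j : (1 <= k)%N -> (1 <= j)%N -> k <> j -> cos (t k) != cos (t j).
Proof.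
have inI : forall m, (1 <= m)%N -> t m \in `[0, pi].
  move=> m m1; rewrite in_itv /=; have := t_ge m1; have := t_lt m1.
  have := pi4_gt0; have := @pi_gt0 R; move=> *; apply/andP; split; lra.
move=> k1 j1 kj; rewrite neq_lt.
case: (ltnP k j) => [kj'|jk'].
  have := ltr_cos (inI _ k1) (inI _ j1); rewrite /= t_mono // => ->.
  by rewrite orbT.
have jk : (j < k)%N by rewrite ltn_neqAle jk' andbT; apply/eqP => h; apply: kj.
by have := ltr_cos (inI _ j1) (inI _ k1); rewrite /= t_mono // => ->.
Qed.

Lemma cvg_cos_t : cos (t n) @[n --> \oo] --> (0 : R).
Proof.
rewrite -cos_pihalf; apply: (continuous_cvg _ _ ht_lim) => //; exact: continuous_cos.
Qed.

Lemma cvg_sin_t : sin (t n) @[n --> \oo] --> (1 : R).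
Proof.
rewrite -sin_pihalf; apply: (continuous_cvg _ _ ht_lim) => //; exact: continuous_sin.
Qed.

Definition A3 := [set x : 'rV[R]_3 | exists k : nat, (1 <= k)%N /\
                       x = pt3 (cos (t k)) (sin (t k)) ((-1) ^+ k)].
Definition C3 := cl_conv_hull A3.

Lemma sgn_abs k : `|(-1) ^+ k : R| <= 1.
Proof. by rewrite normrX normrN1 expr1n. Qed.

Lemma gen_facts k : (1 <= k)%N -> [/\ 0 < cos (t k), 0 < sin (t k),
  cos (t k) ^+ 2 + sin (t k) ^+ 2 = 1, -1 <= (-1) ^+ k :> R & (-1) ^+ k <= 1 :> R].
Proof.
move=> k1; split; [exact: cos_t_gt0|exact: sin_t_gt0|exact: cos2Dsin2| |].
- by have := sgn_abs k; rewrite ler_norml => /andP[].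
- by have := sgn_abs k; rewrite ler_norml => /andP[].
Qed.

Lemma A3_half a b c d M :
  (forall k, (1 <= k)%N -> a * cos (t k) + b * sin (t k) + c * (-1) ^+ k + d <= M) ->
  forall q, C3 q -> a * q ord0 i0 + b * q ord0 i1 + c * q ord0 i2 + d <= M.
Proof.
move=> H q Cq; apply: (cl_half3 _ Cq) => x [k [k1 ->]].
by have [-> -> ->] := pt3E (cos (t k)) (sin (t k)) ((-1) ^+ k); apply: H.
Qed.

Lemma C3_box q : C3 q -> [/\ 0 <= q ord0 i0, q ord0 i1 <= 1, -1 <= q ord0 i2,
  q ord0 i2 <= 1 & forall s, s * q ord0 i0 + q ord0 i1 <= 1 + s ^+ 2 / 2].
Proof.
move=> Cq; split.
- suff h : -1 * q ord0 i0 + 0 * q ord0 i1 + 0 * q ord0 i2 + 0 <= 0 by lra.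
  apply: (A3_half _ Cq) => k k1; have [c0 _ _ _ _] := gen_facts k1; lra.
- suff h : 0 * q ord0 i0 + 1 * q ord0 i1 + 0 * q ord0 i2 + 0 <= 1 by lra.
  apply: (A3_half _ Cq) => k k1; have := sin_le1 (t k); lra.
- suff h : 0 * q ord0 i0 + 0 * q ord0 i1 + (-1) * q ord0 i2 + 0 <= 1 by lra.
  apply: (A3_half _ Cq) => k k1; have [_ _ _ h _] := gen_facts k1; lra.
- suff h : 0 * q ord0 i0 + 0 * q ord0 i1 + 1 * q ord0 i2 + 0 <= 1 by lra.
  apply: (A3_half _ Cq) => k k1; have [_ _ _ _ h] := gen_facts k1; lra.
- move=> s.
  suff h : s * q ord0 i0 + 1 * q ord0 i1 + 0 * q ord0 i2 + 0 <= 1 + s ^+ 2 / 2 by lra.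
  apply: (A3_half _ Cq) => k k1; have [_ _ h _ _] := gen_facts k1.
  have := sqr_ge0 (cos (t k) - s); have := sqr_ge0 (1 - sin (t k)); nra.
Qed.

Lemma face (nx ny M d b0 bx by' bz : R) : 0 < d ->
  (forall k, (1 <= k)%N -> nx * cos (t k) + ny * sin (t k) <= M) ->
  (forall k, (1 <= k)%N -> nx * cos (t k) + ny * sin (t k) < M ->
     nx * cos (t k) + ny * sin (t k) <= M - d) ->
  (forall k, (1 <= k)%N -> nx * cos (t k) + ny * sin (t k) = M ->
     bx * cos (t k) + by' * sin (t k) + bz * (-1) ^+ k + b0 <= 0) ->
  forall q, C3 q -> nx * q ord0 i0 + ny * q ord0 i1 = M ->
     bx * q ord0 i0 + by' * q ord0 i1 + bz * q ord0 i2 + b0 <= 0.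
Proof.
move=> d0 Hle Hgap Hmax q Cq Hq.
pose B := `|bx| + `|by'| + `|bz| + `|b0| + 1.
have B0 : 0 < B by rewrite /B; have := normr_ge0 bx; have := normr_ge0 by';
  have := normr_ge0 bz; have := normr_ge0 b0; lra.
pose mu := d / B.
have mu0 : 0 < mu by rewrite /mu divr_gt0.
have muB : mu * B = d by rewrite /mu mulfVK // gt_eqF.
have LB : forall k, (1 <= k)%N -> bx * cos (t k) + by' * sin (t k) + bz * (-1) ^+ k + b0 <= B.
  move=> k k1.
  have h1 := absmul bx (cos_max (t k)); have h2 := absmul by' (sin_max (t k)).
  have h3 := absmul bz (sgn_abs k); have h4 := ler_norm b0; rewrite /B; lra.
have Hgen : forall k, (1 <= k)%N -> (nx + mu * bx) * cos (t k) + (ny + mu * by') * sin (t k)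
    + mu * bz * (-1) ^+ k + mu * b0 <= M.
  move=> k k1.
  have -> : (nx + mu * bx) * cos (t k) + (ny + mu * by') * sin (t k) + mu * bz * (-1) ^+ k + mu * b0
    = (nx * cos (t k) + ny * sin (t k)) + mu * (bx * cos (t k) + by' * sin (t k) + bz * (-1) ^+ k + b0).
    by ring.
  have := Hle k k1; rewrite le_eqVlt => /orP[/eqP e|lt].
    have := Hmax k k1 e; rewrite e => h.
    have : mu * (bx * cos (t k) + by' * sin (t k) + bz * (-1) ^+ k + b0) <= 0.
      by rewrite pmulr_rle0.
    lra.
  have := Hgap k k1 lt; have := LB k k1 => h1 h2.
  have : mu * (bx * cos (t k) + by' * sin (t k) + bz * (-1) ^+ k + b0) <= mu * B.
    by rewrite ler_pM2l.
  lra.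
have := A3_half Hgen Cq.
have -> : (nx + mu * bx) * q ord0 i0 + (ny + mu * by') * q ord0 i1 + mu * bz * q ord0 i2 + mu * b0
  = (nx * q ord0 i0 + ny * q ord0 i1) + mu * (bx * q ord0 i0 + by' * q ord0 i1 + bz * q ord0 i2 + b0).
  by ring.
rewrite Hq => h; have : mu * (bx * q ord0 i0 + by' * q ord0 i1 + bz * q ord0 i2 + b0) <= 0 by lra.
by rewrite pmulr_rle0.
Qed.

Lemma gen_in_C3 k : (1 <= k)%N -> C3 (pt3 (cos (t k)) (sin (t k)) ((-1) ^+ k)).
Proof. by move=> k1; apply/subset_closure/conv_sub; exists k. Qed.

Lemma fiber (s : R) (P Q : 'rV[R]_3) : 0 < s -> C3 P -> C3 Q ->
  P ord0 i0 = Q ord0 i0 -> P ord0 i1 = Q ord0 i1 ->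
  (forall q, C3 q -> (s - P ord0 i0) * (q ord0 i0 - P ord0 i0)
                   + (2 - P ord0 i1) * (q ord0 i1 - P ord0 i1) <= 0) ->
  P ord0 i2 = Q ord0 i2.
Proof.
move=> s0 CP CQ e0 e1 HV.
have [bp0 bp1 _ _ bdel] := C3_box CP.
move: e0 e1 HV bp0 bp1 bdel.
set p0 := P ord0 i0; set p1 := P ord0 i1 => e0 e1 HV bp0 bp1 bdel.
pose nx := s - p0; pose ny := 2 - p1; pose M := nx * p0 + ny * p1.
pose g k := nx * cos (t k) + ny * sin (t k).
have HV' : forall q, C3 q -> nx * q ord0 i0 + ny * q ord0 i1 <= M.
  move=> q Cq; have := HV q Cq.
  have -> : (s - p0) * (q ord0 i0 - p0) + (2 - p1) * (q ord0 i1 - p1)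
     = nx * q ord0 i0 + ny * q ord0 i1 - M by rewrite /M /nx /ny; ring.
  lra.
have F1 : forall k, (1 <= k)%N -> g k <= M.
  move=> k k1; have := HV' _ (gen_in_C3 k1).
  by have [-> -> _] := pt3E (cos (t k)) (sin (t k)) ((-1) ^+ k).
have ny1 : 1 <= ny by rewrite /ny; lra.
have Hg : g n @[n --> \oo] --> ny.
  have := @cvgD R R^o _ \oo _ (fun n => nx * cos (t n)) (fun n => ny * sin (t n)) (nx * 0) (ny * 1)
    (@cvgM R _ \oo _ (fun=> nx) (fun n => cos (t n)) nx 0 (cvg_cst _) cvg_cos_t)
    (@cvgM R _ \oo _ (fun=> ny) (fun n => sin (t n)) ny 1 (cvg_cst _) cvg_sin_t).
  by rewrite mulr0 mulr1 add0r; apply.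
have F3 : ny <= M.
  apply: (closed_cvg (fun x => x <= M) (@closed_le R M) _ ny Hg).
  by exists 1%N => // n /= n1; exact: F1.
have F4 : 0 < nx.
  rewrite ltNge; apply/negP => nx0.
  have h1 : nx * p0 <= 0 by nra.
  have h2 : 1 <= p1 by move: F3; rewrite /M; nra.
  have h3 : p1 = 1 by lra.
  have h4 : nx * p0 = 0 by move: F3; rewrite /M h3; lra.
  move/eqP: h4; rewrite mulf_eq0 => /orP[/eqP h|/eqP h].
    have hp0 : p0 = s by move: h; rewrite /nx; lra.
    have := bdel s; rewrite hp0 h3 => hb.
    have : s * s <= 0 by lra.
    by rewrite leNgt mulr_gt0.
  by move: nx0; rewrite /nx h; lra.
have ny0 : 0 < ny by lra.
have [k0 [k01 gk0]] : exists k0, (1 <= k0)%N /\ ny < g k0.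
  have := cvgr_lt 0 cvg_cos_t (nx / ny) (divr_gt0 F4 ny0) => -[N _ HN].
  exists N.+1; split => //.
  have := HN N.+1 (leqnSn N); rewrite ltr_pdivlMr // => hc.
  have [c0 sn0 cs _ _] := gen_facts (ltn0Sn N).
  have := sin_le1 (t N.+1); move: hc c0 sn0 cs; rewrite /g.
  set c := cos _; set sn := sin _ => hc c0 sn0 cs sn1.
  have h1 : 1 - sn <= c ^+ 2 by nra.
  have h2 : ny * c ^+ 2 < nx * c by rewrite expr2 mulrA; rewrite -subr_gt0; nra.
  nra.
pose th := (ny + g k0) / 2.
have [N2 _ HN2] := cvgr_lt ny Hg th (ltac:(rewrite /th; lra) : ny < th).
have [k1 [hk1 Hk1]] := finite_argmax g (N2 + k0).
have gmax : forall k, (1 <= k)%N -> g k <= g k1.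
  move=> k k1'; case: (leqP k (N2 + k0).+1) => hk.
    by apply: Hk1; rewrite k1' hk.
  have := HN2 k (leq_trans (leq_addr k0 N2) (ltnW (ltnW hk))).
  have := Hk1 k0; rewrite k01 (leq_trans (leq_addl N2 k0) (leqnSn _)) => /(_ isT); rewrite /th; lra.
have gk1 : g k1 = M.
  apply/eqP; rewrite eq_le F1; last by case/andP: hk1.
  suff h : nx * p0 + ny * p1 + 0 * P ord0 i2 + 0 <= g k1 by move: h; rewrite /M; lra.
  apply: (A3_half _ CP) => k k1'; have := gmax k k1'; rewrite /g; lra.
have k11 : (1 <= k1)%N by case/andP: hk1.
have thM : th < M by have := F1 k0 k01; rewrite /th; lra.
have [d d0 Hd] := finite_gap g M N2.
pose dl := Num.min d (M - th).
have dl0 : 0 < dl by rewrite lt_min d0 subr_gt0.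
have gap : forall k, (1 <= k)%N -> g k < M -> g k <= M - dl.
  move=> k _ gk; have h1 : dl <= d by rewrite ge_min lexx.
  have h2 : dl <= M - th by rewrite ge_min lexx orbT.
  case: (ltnP k N2) => hk; first by have := Hd k hk gk; lra.
  by have := HN2 k hk; lra.
have PM : nx * P ord0 i0 + ny * P ord0 i1 = M by [].
have QM : nx * Q ord0 i0 + ny * Q ord0 i1 = M by rewrite -e0 -e1.
have Face := @face nx ny M dl.
case: (pselect (exists j, (1 <= j)%N /\ j <> k1 /\ g j = M)) => [[j [j1 [jk gj]]]|nj].
  pose dx := cos (t j) - cos (t k1); pose dy := sin (t j) - sin (t k1).
  pose dz := (-1) ^+ j - (-1) ^+ k1 : R.
  pose ax := - (dz * dx); pose ay := - (dz * dy); pose az := dx ^+ 2 + dy ^+ 2.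
  pose b0 := - (ax * cos (t k1) + ay * sin (t k1) + az * (-1) ^+ k1).
  have Hm : forall k, (1 <= k)%N -> g k = M ->
      ax * cos (t k) + ay * sin (t k) + az * (-1) ^+ k + b0 = 0.
    move=> k k1' gk.
    have [->|kk1] := eqVneq k k1; first by rewrite /b0; ring.
    have [->|kj] := eqVneq k j; first by rewrite /b0 /ax /ay /az /dx /dy /dz; ring.
    exfalso.
    have [_ _ ha _ _] := gen_facts k11; have [_ _ hb _ _] := gen_facts j1.
    have [_ _ hc _ _] := gen_facts k1'.
    apply: (three_points ha hb hc (n1 := nx) (n2 := ny)).
    - by move: gk1 gj; rewrite /g => -> ->.
    - by move: gk1 gk; rewrite /g => -> ->.
    - exact: lt0r_neq0.
    - by apply: cos_t_inj => // h; apply: jk.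
    - by apply: cos_t_inj => // h; move: kk1; rewrite h eqxx.
    - by apply: cos_t_inj => // h; move: kj; rewrite h eqxx.
  have Lle : forall q, C3 q -> nx * q ord0 i0 + ny * q ord0 i1 = M ->
      ax * q ord0 i0 + ay * q ord0 i1 + az * q ord0 i2 + b0 = 0.
    move=> q Cq qM; apply/eqP; rewrite eq_le; apply/andP; split.
      apply: (Face b0 ax ay az dl0 F1 gap _ q Cq qM) => k k1' gk.
      by rewrite Hm.
    suff : (- ax) * q ord0 i0 + (- ay) * q ord0 i1 + (- az) * q ord0 i2 + (- b0) <= 0 by lra.
    apply: (Face (- b0) (- ax) (- ay) (- az) dl0 F1 gap _ q Cq qM) => k k1' gk.
    have := Hm k k1' gk; lra.
  have LP := Lle P CP PM; have LQ := Lle Q CQ QM.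
  have az0 : 0 < az.
    have : dx != 0 by rewrite subr_eq0; apply: cos_t_inj => //.
    rewrite /az => dx0; have := sqr_ge0 dy; have : 0 < dx ^+ 2 by rewrite exprn_even_gt0.
    lra.
  have : az * (P ord0 i2 - Q ord0 i2) = 0.
    by rewrite mulrBr; move: LP LQ; rewrite -e0 -e1 -/p0 -/p1; lra.
  by move/eqP; rewrite mulf_eq0 (gt_eqF az0) subr_eq0 /= => /eqP.
have Hm : forall k, (1 <= k)%N -> g k = M -> k = k1.
  move=> k k1' gk; apply: contra_notP nj => kk1; exists k; split => //.
have zfix : forall q, C3 q -> nx * q ord0 i0 + ny * q ord0 i1 = M -> q ord0 i2 = (-1) ^+ k1.
  move=> q Cq qM; apply/eqP; rewrite eq_le; apply/andP; split.
    suff : 0 * q ord0 i0 + 0 * q ord0 i1 + 1 * q ord0 i2 + (- (-1) ^+ k1) <= 0 by lra.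
    apply: (Face _ _ _ _ dl0 F1 gap _ q Cq qM) => k k1' gk.
    rewrite (Hm k k1' gk); lra.
  suff : 0 * q ord0 i0 + 0 * q ord0 i1 + (- 1) * q ord0 i2 + (-1) ^+ k1 <= 0 by lra.
  apply: (Face _ _ _ _ dl0 F1 gap _ q Cq qM) => k k1' gk.
  rewrite (Hm k k1' gk); lra.
by rewrite (zfix P CP PM) (zfix Q CQ QM).
Qed.

Lemma A3_box x : A3 x -> forall i, -1 <= x ord0 i <= 1.
Proof.
move=> [k [k1 ->]] i; rewrite mxE.
have [c0 s0 cs z1 z2] := gen_facts k1.
have hc := cos_le1 (t k); have hc' := cos_geN1 (t k).
have hs := sin_le1 (t k); have hs' := sin_geN1 (t k).
by case: i => -[|[|[|m]]] Hm /=; apply/andP; split.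
Qed.


Lemma coordE (n : nat) (a b c : 'rV[R]_n) (e : R) : a = b + e *: (c - b) ->
  forall i, a ord0 i = b ord0 i + e * (c ord0 i - b ord0 i).
Proof. by move=> -> i; rewrite !mxE. Qed.

Lemma part3 (eps : R) : 0 < eps < 1 ->
  let D1 := conv_hull [set pt3 (-2 : R) 2 1; pt3 (-2) 2 (-1)] in
  let D2 := conv_hull [set pt3 (2 : R) 2 1; pt3 2 2 (-1)] in
  exists u1 u2 u3, eps_cycle D1 D2 C3 eps u1 u2 u3 /\
     forall v1 v2 v3, eps_cycle D1 D2 C3 eps v1 v2 v3 ->
       [/\ v1 = u1, v2 = u2 & v3 = u3].
Proof.
move=> he D1 D2.
have [e0 e1] : 0 < eps /\ eps < 1 by case/andP: he.
pose s := 2 * eps / (2 - eps).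
have s0 : 0 < s by rewrite /s; apply: divr_gt0; lra.
have [P [CP Pmin]] := @exists_min R 3 A3 i0 i1 s 2 A3_box
  (ex_intro _ _ (ex_intro _ 1%N (conj (leqnn 1) erefl))).
have VI := VI_min CP Pmin.
rewrite /fij in VI.
have [_ _ Zl Zu _] := C3_box CP.
pose X := P ord0 i0; pose Y := P ord0 i1; pose Z := P ord0 i2.
pose X2 := num eps (-2) 2 X / Dn eps; pose X3 := X2 + eps * (X - X2);
pose X1 := X3 + eps * (-2 - X3).
pose Y2 := num eps 2 2 Y / Dn eps; pose Y3 := Y2 + eps * (Y - Y2);
pose Y1 := Y3 + eps * (2 - Y3).
have hZ : -1 <= Z <= 1 by rewrite Zl Zu.
exists (pt3 X1 Y1 Z), (pt3 X2 Y2 Z), (pt3 X3 Y3 Z); split.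
  exists (pt3 (-2) 2 Z), (pt3 2 2 Z), P; split.
    by have := @seg_proj R (-2) 2 (pt3 X3 Y3 Z); have [_ _ ->] := pt3E X3 Y3 Z; apply.
  split.
    by have := @seg_proj R 2 2 (pt3 X1 Y1 Z); have [_ _ ->] := pt3E X1 Y1 Z; apply.
  split.
    apply: proj_of_VI => // q Cq; rewrite dot3 !mxE /=.
    rewrite -/X -/Y -/Z subrr mul0r addr0 kappa_id // pmulr_rle0; last exact: kappa_gt0.
    exact: VI.
  split; first by apply: rV3_eq; rewrite !mxE /= //; ring.
  split.
    apply: rV3_eq; rewrite !mxE /=; last by ring.
      exact: (cyc_exists (-2) 2 X he).
    exact: (cyc_exists 2 2 Y he).
  by apply: rV3_eq; rewrite !mxE /= -/X -/Y -/Z //; ring.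
move=> v1 v2 v3 [q1 [q2 [q3 [pr1 [pr2 [pr3 [E1 [E2 E3]]]]]]]].
have [q1e q1b q1m] := seg_min pr1; have [q2e q2b q2m] := seg_min pr2.
have Cq3 : C3 q3 by case: pr3.
have [_ _ q3l q3u _] := C3_box Cq3.
have E1c := coordE E1; have E2c := coordE E2; have E3c := coordE E3.
have q1x : q1 ord0 i0 = -2 by rewrite q1e mxE.
have q1y : q1 ord0 i1 = 2 by rewrite q1e mxE.
have q2x : q2 ord0 i0 = 2 by rewrite q2e mxE.
have q2y : q2 ord0 i1 = 2 by rewrite q2e mxE.
have [za z1 zb z2 zq] := zcycle he (E1c i2) (E2c i2) (E3c i2) q1b q2b
  (ltac:(by rewrite q3l q3u)) q1m q2m.
have v2x := cyc_solve he (E1c i0) (E2c i0) (E3c i0); rewrite q1x q2x in v2x.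
have v2y := cyc_solve he (E1c i1) (E2c i1) (E3c i1); rewrite q1y q2y in v2y.
have VIq : forall q, C3 q -> (s - q3 ord0 i0) * (q ord0 i0 - q3 ord0 i0)
     + (2 - q3 ord0 i1) * (q ord0 i1 - q3 ord0 i1) <= 0.
  move=> q Cq; have := VI_of_proj pr3 Cq; rewrite dot3 !mxE.
  rewrite v2x v2y z2 zq subrr mul0r addr0 kappa_id // pmulr_rle0 //; exact: kappa_gt0.
have h1 := VIq P CP; have h2 := VI q3 Cq3.
have hsum : (q3 ord0 i0 - P ord0 i0) ^+ 2 + (q3 ord0 i1 - P ord0 i1) ^+ 2 <= 0.
  have -> : (q3 ord0 i0 - P ord0 i0) ^+ 2 + (q3 ord0 i1 - P ord0 i1) ^+ 2 =
    (s - q3 ord0 i0) * (P ord0 i0 - q3 ord0 i0) + (2 - q3 ord0 i1) * (P ord0 i1 - q3 ord0 i1)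
     + ((s - P ord0 i0) * (q3 ord0 i0 - P ord0 i0) + (2 - P ord0 i1) * (q3 ord0 i1 - P ord0 i1)).
    by ring.
  lra.
have sq0 := sqr_ge0 (q3 ord0 i0 - P ord0 i0); have sq1 := sqr_ge0 (q3 ord0 i1 - P ord0 i1).
have ex : q3 ord0 i0 = X.
  have : (q3 ord0 i0 - P ord0 i0) ^+ 2 = 0 by lra.
  by move/eqP; rewrite sqrf_eq0 subr_eq0 => /eqP.
have ey : q3 ord0 i1 = Y.
  have : (q3 ord0 i1 - P ord0 i1) ^+ 2 = 0 by lra.
  by move/eqP; rewrite sqrf_eq0 subr_eq0 => /eqP.
have ez : q3 ord0 i2 = Z := fiber s0 Cq3 CP (ltac:(by rewrite ex)) (ltac:(by rewrite ey)) VIq.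
split.
- apply: rV3_eq; rewrite !mxE /=.
  + by rewrite E1c E3c v2x q1x ex.
  + by rewrite E1c E3c v2y q1y ey.
  + by rewrite z1 -zq ez.
- apply: rV3_eq; rewrite !mxE /=.
  + by rewrite v2x ex.
  + by rewrite v2y ey.
  + by rewrite z2 -zq ez.
- apply: rV3_eq; rewrite !mxE /=.
  + by rewrite E3c v2x ex.
  + by rewrite E3c v2y ey.
  + by rewrite -zq ez.
Qed.

Definition A2 := [set x : 'rV[R]_2 | exists k : nat, (1 <= k)%N /\ x = pt2 (cos (t k)) (sin (t k))].

Lemma A2_box x : A2 x -> forall i, -1 <= x ord0 i <= 1.
Proof.
move=> [k [k1 ->]] i; rewrite mxE.
have hc := cos_le1 (t k); have hc' := cos_geN1 (t k).
have hs := sin_le1 (t k); have hs' := sin_geN1 (t k).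
by case: i => -[|[|m]] Hm /=; apply/andP; split.
Qed.

Lemma part2 (eps : R) : 0 < eps < 1 ->
  let D1 := [set pt2 (-2 : R) 2] in
  let D2 := [set pt2 (2 : R) 2] in
  exists u1 u2 u3, eps_cycle D1 D2 (cl_conv_hull A2) eps u1 u2 u3 /\
     forall v1 v2 v3, eps_cycle D1 D2 (cl_conv_hull A2) eps v1 v2 v3 ->
       [/\ v1 = u1, v2 = u2 & v3 = u3].
Proof.
move=> he D1 D2.
have [e0 e1] : 0 < eps /\ eps < 1 by case/andP: he.
pose s := 2 * eps / (2 - eps).
have s0 : 0 < s by rewrite /s; apply: divr_gt0; lra.
have [P [CP Pmin]] := @exists_min R 2 A2 j0 j1 s 2 A2_box
  (ex_intro _ _ (ex_intro _ 1%N (conj (leqnn 1) erefl))).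
have VI := VI_min CP Pmin.
rewrite /fij in VI.
pose X := P ord0 j0; pose Y := P ord0 j1.
pose X2 := num eps (-2) 2 X / Dn eps; pose X3 := X2 + eps * (X - X2);
pose X1 := X3 + eps * (-2 - X3).
pose Y2 := num eps 2 2 Y / Dn eps; pose Y3 := Y2 + eps * (Y - Y2);
pose Y1 := Y3 + eps * (2 - Y3).
exists (pt2 X1 Y1), (pt2 X2 Y2), (pt2 X3 Y3); split.
  exists (pt2 (-2) 2), (pt2 2 2), P; split.
    by split => // q ->.
  split.
    by split => // q ->.
  split.
    apply: proj_of_VI => // q Cq; rewrite dot2 !mxE /=.
    rewrite -/X -/Y kappa_id // pmulr_rle0; last exact: kappa_gt0.
    exact: VI.
  split; first by apply: rV2_eq; rewrite !mxE /=.
  split.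
    apply: rV2_eq; rewrite !mxE /=.
      exact: (cyc_exists (-2) 2 X he).
    exact: (cyc_exists 2 2 Y he).
  by apply: rV2_eq; rewrite !mxE /=.
move=> v1 v2 v3 [q1 [q2 [q3 [[q1e _] [[q2e _] [pr3 [E1 [E2 E3]]]]]]]].
have Cq3 : cl_conv_hull A2 q3 by case: pr3.
have E1c := coordE E1; have E2c := coordE E2; have E3c := coordE E3.
have q1x : q1 ord0 j0 = -2 by rewrite q1e mxE.
have q1y : q1 ord0 j1 = 2 by rewrite q1e mxE.
have q2x : q2 ord0 j0 = 2 by rewrite q2e mxE.
have q2y : q2 ord0 j1 = 2 by rewrite q2e mxE.
have v2x := cyc_solve he (E1c j0) (E2c j0) (E3c j0); rewrite q1x q2x in v2x.
have v2y := cyc_solve he (E1c j1) (E2c j1) (E3c j1); rewrite q1y q2y in v2y.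
have VIq : forall q, cl_conv_hull A2 q -> (s - q3 ord0 j0) * (q ord0 j0 - q3 ord0 j0)
     + (2 - q3 ord0 j1) * (q ord0 j1 - q3 ord0 j1) <= 0.
  move=> q Cq; have := VI_of_proj pr3 Cq; rewrite dot2 !mxE.
  rewrite v2x v2y kappa_id // pmulr_rle0 //; exact: kappa_gt0.
have h1 := VIq P CP; have h2 := VI q3 Cq3.
have hsum : (q3 ord0 j0 - P ord0 j0) ^+ 2 + (q3 ord0 j1 - P ord0 j1) ^+ 2 <= 0.
  have -> : (q3 ord0 j0 - P ord0 j0) ^+ 2 + (q3 ord0 j1 - P ord0 j1) ^+ 2 =
    (s - q3 ord0 j0) * (P ord0 j0 - q3 ord0 j0) + (2 - q3 ord0 j1) * (P ord0 j1 - q3 ord0 j1)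
     + ((s - P ord0 j0) * (q3 ord0 j0 - P ord0 j0) + (2 - P ord0 j1) * (q3 ord0 j1 - P ord0 j1)).
    by ring.
  lra.
have sq0 := sqr_ge0 (q3 ord0 j0 - P ord0 j0); have sq1 := sqr_ge0 (q3 ord0 j1 - P ord0 j1).
have ex : q3 ord0 j0 = X.
  have : (q3 ord0 j0 - P ord0 j0) ^+ 2 = 0 by lra.
  by move/eqP; rewrite sqrf_eq0 subr_eq0 => /eqP.
have ey : q3 ord0 j1 = Y.
  have : (q3 ord0 j1 - P ord0 j1) ^+ 2 = 0 by lra.
  by move/eqP; rewrite sqrf_eq0 subr_eq0 => /eqP.
split.
- apply: rV2_eq; rewrite !mxE /=.
  + by rewrite E1c E3c v2x q1x ex.
  + by rewrite E1c E3c v2y q1y ey.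
- apply: rV2_eq; rewrite !mxE /=.
  + by rewrite v2x ex.
  + by rewrite v2y ey.
- apply: rV2_eq; rewrite !mxE /=.
  + by rewrite E3c v2x ex.
  + by rewrite E3c v2y ey.
Qed.

End Main.

Unset Implicit Arguments.
Set Strict Implicit.

Theorem proposition2 (R : realType) (t : nat -> R)
  (ht_incr : forall k : nat, (1 <= k)%N -> t k < t k.+1)
  (ht1 : t 1%N = pi / 4)
  (ht_lim : t @ \oo --> pi / 2) :
  let C1 := conv_hull [set pt3 (-2) 2 1; pt3 (-2) 2 (-1)] in
  let C2 := conv_hull [set pt3 2 2 1; pt3 2 2 (-1)] in
  let C3 := cl_conv_hull
              [set x | exists k : nat, (1 <= k)%N /\
                       x = pt3 (cos (t k)) (sin (t k)) ((-1) ^+ k)] in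
  let C1' := [set pt2 (-2 : R) 2] in
  let C2' := [set pt2 (2 : R) 2] in
  let C3' := cl_conv_hull
              [set x | exists k : nat, (1 <= k)%N /\
                       x = pt2 (cos (t k)) (sin (t k))] in
  forall eps : R, 0 < eps < 1 ->
    (exists u1 u2 u3, eps_cycle C1 C2 C3 eps u1 u2 u3 /\
       forall v1 v2 v3, eps_cycle C1 C2 C3 eps v1 v2 v3 ->
         [/\ v1 = u1, v2 = u2 & v3 = u3]) /\
    (exists u1 u2 u3, eps_cycle C1' C2' C3' eps u1 u2 u3 /\
       forall v1 v2 v3, eps_cycle C1' C2' C3' eps v1 v2 v3 ->
         [/\ v1 = u1, v2 = u2 & v3 = u3]).
Proof.
move=> C1 C2 C3 C1' C2' C3' eps he; split.
  exact: (part3 ht_incr ht1 ht_lim he).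
exact: (part2 t he).
Qed.
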